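(* Let $n \geq s$ be positive integers and let $P_0 > 0$. Let $\mathbf{\Psi}\in\mathbb{C}^{n\times n}$ be positive semi-definite with eigenvalue decomposition $\mathbf{\Psi} = \mathbf{U}_2\mathbf{\Lambda}_2\mathbf{U}_2^H$, where $\mathbf{U}_2$ is unitary and $\mathbf{\Lambda}_2$ is diagonal with diagonal entries $[\mathbf{\Lambda}_2]_{1,1}\geq \cdots \geq [\mathbf{\Lambda}_2]_{n,n}\geq 0$. Let $\mathbf{A}\in\mathbb{C}^{n\times s}$ satisfy $\text{tr}(\mathbf{A}\mathbf{A}^H)\leq P_0$, and let $\mathbf{A}^H\mathbf{\Psi}\mathbf{A}=\mathbf{U}_1\mathbf{\Lambda}_1\mathbf{U}_1^H$ be an eigenvalue decomposition, where $\mathbf{U}_1$ is unitary and $\mathbf{\Lambda}_1$ is diagonal with $[\mathbf{\Lambda}_1]_{1,1}\geq\cdots\geq[\mathbf{\Lambda}_1]_{s,s}\geq 0$. Define $\tilde{\mathbf{p}}\in\mathbb{R}^s$ by $[\tilde{\mathbf{p}}]_i = [\mathbf{\Lambda}_1]_{i,i}/[\mathbf{\Lambda}_2]_{i,i}$ for $i=1,\dots,s$ (with $[\tilde{\mathbf{p}}]_i = 0$ whenever $[\mathbf{\Lambda}_2]_{i,i}=0$), let $\mathbf{P}$ be the real $n\times s$ matrix $\mathbf{P} = \left[ \begin{array}{c} \text{diag}(\tilde{\mathbf{p}}) \\ \mathbf{0}_{(n-s)\times s} \end{array} \right]$, let $\mathbf{P}^{1/2}$ denote the entrywise square root of $\mathbf{P}$,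 and set $\tilde{\mathbf{A}}=\mathbf{U}_2\mathbf{P}^{1/2}$. Then $$\tilde{\mathbf{A}}^H\mathbf{\Psi}\tilde{\mathbf{A}} = \mathbf{\Lambda}_1 \quad \text{and} \quad \text{tr}(\tilde{\mathbf{A}}\tilde{\mathbf{A}}^H)\leq \text{tr}(\mathbf{A}\mathbf{A}^H).$$
   Context: $(\cdot)^H$ denotes conjugate transpose, $\text{tr}$ the trace, and $\text{diag}(\mathbf{x})$ the diagonal matrix whose diagonal entries are the entries of the vector $\mathbf{x}$. *)

(* Defs.v *)
From HB Require Import structures.
From mathcomp Require Import all_boot all_order all_algebra.
From mathcomp Require Export sesquilinear spectral.
Set Implicit Arguments. Unset Strict Implicit. Unset Printing Implicit Defensive.
Import Order.TTheory GRing.Theory Num.Theory.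
Local Open Scope ring_scope.
Local Open Scope sesquilinear_scope.

(* Conjugate transpose is  M ^t*  (= (map_mx conjC M)^T), from spectral.v. *)

Definition psdmx (C : numClosedFieldType) (n : nat) (M : 'M[C]_n) : Prop :=
  M ^t* = M /\ forall x : 'cV[C]_n, 0 <= (x ^t* *m M *m x) 0 0.

Definition nonincr_nonneg (C : numClosedFieldType) (n : nat) (d : 'rV[C]_n) : Prop :=
  (forall i j : 'I_n, (i <= j)%N -> d 0 j <= d 0 i) /\ (forall i, 0 <= d 0 i).

(* The n x s real matrix P = [diag(ptilde); 0_{(n-s) x s}], where
   ptilde_i = [Lambda1]_{ii} / [Lambda2]_{ii}  (0 when [Lambda2]_{ii} = 0). *)
Definition Pmat (C : numClosedFieldType) (n s : nat)
    (d1 : 'rV[C]_s) (d2 : 'rV[C]_n) : 'M[C]_(n, s) :=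
  \matrix_(i < n, j < s)
    if (i == j :> nat) then (if d2 0 i == 0 then 0 else d1 0 j / d2 0 i) else 0.

Definition Phalf (C : numClosedFieldType) (n s : nat)
    (d1 : 'rV[C]_s) (d2 : 'rV[C]_n) : 'M[C]_(n, s) :=
  map_mx sqrtC (Pmat d1 d2).

Definition Atilde (C : numClosedFieldType) (n s : nat)
    (U2 : 'M[C]_n) (d1 : 'rV[C]_s) (d2 : 'rV[C]_n) : 'M[C]_(n, s) :=
  U2 *m Phalf d1 d2.

(* Main.v *)
Require Import Defs.
From HB Require Import structures.
From mathcomp Require Import all_boot all_order all_algebra.
From mathcomp Require Import sesquilinear spectral.
From mathcomp Require Import ring.
Import Order.TTheory GRing.Theory Num.Theory.
Local Open Scope ring_scope.
Local Open Scope sesquilinear_scope.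

Lemma sum_le_narrow (C : nmodType) n m (F : nat -> C) : (m < n)%N ->
  \sum_(k < n | (k <= m)%N) F k = \sum_(k < m.+1) F k.
Proof. by move=> hm; rewrite (big_ord_widen n F hm). Qed.
Arguments sum_le_narrow {C} [n m] F.

Lemma count_le (C : numDomainType) n m : (m < n)%N ->
  \sum_(k < n | (k <= m)%N) (1:C) = m.+1%:R.
Proof. by move=> hm; rewrite (sum_le_narrow (fun _ => 1)) // sumr_const card_ord. Qed.

Section Comb.
Variables (C : numDomainType) (s n : nat) (hsn : (s <= n)%N)
  (a w : nat -> C) (c : nat -> nat -> C).
Hypotheses (ha : forall i j, (i <= j)%N -> (j < s)%N -> a j <= a i)
  (ha0 : forall j, 0 <= a j)
  (hw : forall i j, (i <= j)%N -> (j < n)%N -> w j != 0 -> w i != 0 /\ w i <= w j)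
  (hw0 : forall k, 0 <= w k)
  (hc0 : forall j k, 0 <= c j k)
  (hrow : forall j, (j < s)%N -> a j != 0 -> \sum_(k < n) c j k = 1)
  (hcol : forall k, (k < n)%N -> \sum_(j < s) c j k <= 1)
  (hcw : forall j k, w k = 0 -> c j k = 0).

Let Ck m k := \sum_(j < s | (j <= m)%N) c j k.

Lemma Ck_le1 m k : (k < n)%N -> Ck m k <= 1.
Proof.
move=> hk; apply: (le_trans _ (hcol _ hk));
idtac.
 rewrite /Ck [X in _ <= X](bigID (fun j : 'I_s => (j <= m)%N)) /=.
by rewrite lerDl sumr_ge0.
Qed.

Lemma Ck_ge0 m k : 0 <= Ck m k.
Proof. exact: sumr_ge0. Qed.

Lemma am_ne0 m j : (m < s)%N -> a m != 0 -> (j <= m)%N -> a j != 0.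
Proof.
move=> hm am jm; have := ha _ _ jm hm; rewrite le_eqVlt => /orP[/eqP <-//|].
move=> /(le_lt_trans (ha0 m)); by rewrite lt0r => /andP[].
Qed.

Lemma sumCk m : (m < s)%N -> a m != 0 -> \sum_(k < n) Ck m k = m.+1%:R.
Proof.
move=> hm am; rewrite /Ck exchange_big /=.
rewrite (eq_bigr (fun _ => 1)); first by rewrite count_le.
by move=> j jm; apply: hrow _; [apply: leq_ltn_trans hm | exact: (am_ne0 m j hm am jm)].
Qed.

Lemma jk m : (m < s)%N -> a m != 0 -> w m != 0.
Proof.
move=> hm am; apply/negP => /eqP wm.
have hmn : (m < n)%N by apply: leq_trans hsn.
have : \sum_(k < n) Ck m k <= m%:R.
  rewrite (bigID (fun k : 'I_n => (m <= k)%N)) /= big1 ?add0r; last first.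
    move=> k mk; rewrite /Ck big1 // => j _; apply: hcw.
    apply/eqP; apply/negP => /negP wk0; have [] := hw _ _ mk (ltn_ord k) wk0.
    by rewrite wm eqxx.
  apply: (@le_trans _ _ (\sum_(k < n | ~~ (m <= k)%N) (1:C))).
    by apply: ler_sum => k _; apply: Ck_le1.
  case: m hm am wm hmn => [|m] hm am wm hmn.
    by rewrite big_pred0 // => k.
  rewrite (eq_bigl (fun k : 'I_n => (k <= m)%N)) ?count_le //; [exact: ltnW hmn | move=> k /=; by rewrite -leqNgt].

by rewrite sumCk // ler_nat ltnn.
Qed.

Lemma pivot m : (m < s)%N -> a m != 0 ->
  0 <= \sum_(j < s | (j <= m)%N) (\sum_(k < n) c j k * w k - w j).
Proof.
move=> hm am; have wm := jk m hm am.
have hmn : (m < n)%N by apply: leq_trans hsn.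
rewrite sumrB exchange_big /=.
have -> : \sum_(j < s | (j <= m)%N) w j = \sum_(k < n) (k <= m)%:R * w k.
  rewrite sum_le_narrow // -(sum_le_narrow w hmn) big_mkcond /=.
  by apply: eq_bigr => k _; case: ifP; rewrite ?mul1r ?mul0r.
rewrite -sumrB.
have -> : \sum_(k < n) (\sum_(j < s | (j <= m)%N) c j k * w k - (k <= m)%:R * w k)
   = \sum_(k < n) (Ck m k - (k <= m)%:R) * w k.
  by apply: eq_bigr => k _; rewrite mulrBl /Ck mulr_suml.
apply: (@le_trans _ _ (\sum_(k < n) (Ck m k - (k <= m)%:R) * w m)).
  rewrite -mulr_suml sumrB sumCk // (eq_bigr (fun i : 'I_n => if (i <= m)%N then (1:C) else 0)); last by move=> i _; case: ifP.
  by rewrite -big_mkcond /= count_le // subrr mul0r.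
apply: ler_sum => k _.
rewrite -subr_ge0 -mulrBr.
case: (leqP k m) => km.
  have [wk0 wkm] := hw _ _ km hmn wm.
  apply: mulr_le0; first by rewrite subr_le0 Ck_le1.
  by rewrite subr_le0.
rewrite subr0; case: (boolP (w k == 0)) => [/eqP wk0|wk0].
  by rewrite /Ck big1 ?mul0r // => j _; apply: hcw.
have [_ wmk] := hw _ _ (ltnW km) (ltn_ord k) wk0.
by apply: mulr_ge0; [apply: Ck_ge0 | rewrite subr_ge0].
Qed.

Lemma comb_main : \sum_(j < s) a j * w j <= \sum_(j < s) a j * \sum_(k < n) c j k * w k.
Proof.
rewrite -subr_ge0 -sumrB.
under eq_bigr do rewrite -mulrBr.
pose A m := if (m < s)%N then a m else 0.
pose d m := A m - A m.+1.
have aE : forall j : 'I_s, a j = \sum_(m < s | (j <= m)%N) d m.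
  move=> j; have -> : \sum_(m < s | (j <= m)%N) d m = \sum_(j <= m < s) d m by rewrite big_geq_mkord.
  rewrite /d.
  rewrite (eq_bigr (fun m => - (A m.+1 - A m))); last by move=> i _; rewrite opprB.
  rewrite sumrN telescope_sumr; last by apply: ltnW.
  by rewrite /A ltnn ltn_ord sub0r opprK.
have -> : \sum_(j < s) a j * (\sum_(k < n) c j k * w k - w j) =
   \sum_(m < s) d m * \sum_(j < s | (j <= m)%N) (\sum_(k < n) c j k * w k - w j).
  under eq_bigr do rewrite aE mulr_suml.
  rewrite (exchange_big_dep (fun _ => true)) //=.
  by apply: eq_bigr => m _; rewrite mulr_sumr.
apply: sumr_ge0 => m _.
case: (boolP (a m == 0)) => [/eqP am|am].
  suff -> : d m = 0 by rewrite mul0r.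
  rewrite /d /A ltn_ord am sub0r; case: ifP => [hm1|_]; last by rewrite oppr0.
  apply/eqP; rewrite oppr_eq0 eq_le ha0 andbT -am; exact: ha _ _ _ _.
apply: mulr_ge0; last exact: pivot.
rewrite /d /A ltn_ord subr_ge0; case: ifP => // hm1; exact: ha _ _ _ _.
Qed.

End Comb.

Lemma bessel (C : numClosedFieldType) n s (Uh : 'M[C]_(n,s)) (E : 'rV[C]_s) :
  Uh ^t* *m Uh = diag_mx E ->
  (forall j, E 0 j = 1 \/ (E 0 j = 0 /\ forall k, Uh k j = 0)) ->
  forall k, \sum_j Uh k j * (Uh k j)^* <= 1.
Proof.
move=> hUU hE k.
have hU : Uh *m diag_mx E = Uh.
  apply/matrixP => i j; rewrite mul_mx_diag mxE.
  by case: (hE j) => [->|[-> h]]; rewrite ?mulr1 ?mulr0 ?h.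
pose P := Uh *m Uh ^t*.
have PP : P *m P = P by rewrite /P mulmxA -(mulmxA Uh) hUU hU.
have Pk : P k k = \sum_j Uh k j * (Uh k j)^*.
  by rewrite /P mxE; apply: eq_bigr => j _; rewrite !mxE.
have PH : forall m, P m k = (P k m)^*.
  move=> m; rewrite /P !mxE rmorph_sum; apply: eq_bigr => j _.
  by rewrite !mxE rmorphM /= conjCK mulrC.
set x := P k k in Pk.
have x0 : 0 <= x by rewrite Pk; apply: sumr_ge0 => j _; apply: mul_conjC_ge0.
have xx : x * x <= x.
  rewrite {3}/x -PP mxE (bigD1 k) //= lerDl.
  by apply: sumr_ge0 => m _; rewrite PH; apply: mul_conjC_ge0.
rewrite -Pk; case: (boolP (x == 0)) => [/eqP ->|xn0]; first exact: ler01.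
have xp : 0 < x by rewrite lt0r xn0.
by rewrite -(ler_pM2l xp) mulr1.
Qed.

Lemma sqrtC_conj (C : numClosedFieldType) (x : C) : 0 <= x -> (sqrtC x)^* = sqrtC x.
Proof. by move=> x0; rewrite geC0_conj // sqrtC_ge0. Qed.

Lemma sqrtC_mul (C : numClosedFieldType) (x : C) : sqrtC x * sqrtC x = x.
Proof. by rewrite -expr2 sqrtCK. Qed.

Lemma WDW (C : numClosedFieldType) n s (W : 'M[C]_(n,s)) (d : 'rV[C]_n) i j :
  (W ^t* *m diag_mx d *m W) i j = \sum_k (W k i)^* * d 0 k * W k j.
Proof.
rewrite -mulmxA mul_diag_mx !mxE; apply: eq_bigr => k _; by rewrite !mxE mulrA.
Qed.

Lemma MtM (C : numClosedFieldType) n s (M : 'M[C]_(n,s)) i j :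
  (M ^t* *m M) i j = \sum_k (M k i)^* * M k j.
Proof. by rewrite mxE; apply: eq_bigr => k _; rewrite !mxE. Qed.

Section Core.
Variables (C : numClosedFieldType) (n s : nat) (hs : (0 < s)%N) (hsn : (s <= n)%N)
  (d2 : 'rV[C]_n) (d1 : 'rV[C]_s) (W : 'M[C]_(n,s)).
Hypotheses (h2 : nonincr_nonneg d2) (h1 : nonincr_nonneg d1)
  (hW : W ^t* *m diag_mx d2 *m W = diag_mx d1).

Let g (j : 'I_s) : C := if d1 0 j == 0 then 0 else (sqrtC (d1 0 j))^-1.
Let Uh := \matrix_(k < n, j < s) (sqrtC (d2 0 k) * W k j * g j).

Lemma g_ge0 j : 0 <= g j.
Proof. by rewrite /g; case: ifP => _; rewrite ?invr_ge0 ?sqrtC_ge0 ?h1.2. Qed.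

Lemma hUU : Uh ^t* *m Uh = diag_mx (\row_j (d1 0 j != 0)%:R).
Proof.
apply/matrixP => i j; rewrite !mxE.
have := congr1 (fun M : 'M[C]_s => M i j) hW; rewrite WDW !mxE => hij.
transitivity ((g i)^* * g j * \sum_k (W k i)^* * d2 0 k * W k j).
  rewrite mulr_sumr; apply: eq_bigr => k _; rewrite !mxE !rmorphM /=.
  rewrite sqrtC_conj ?h2.2 //.
  rewrite -[in RHS](@sqrtC_mul _ (d2 0 k)); ring.
rewrite hij geC0_conj ?g_ge0 //.
case: (eqVneq i j) => [<-|ne]; last by rewrite mulr0n mulr0 mulr0n.
rewrite !mulr1n /g; case: ifP => [/eqP ->|d0]; first by rewrite !mul0r.
rewrite -[X in _ * X]sqrtC_mul /=.
have y0 : sqrtC (d1 0 i) != 0 by rewrite sqrtC_eq0 d0.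
by field.
Qed.

Lemma Uh_sq k j : Uh k j * (Uh k j)^* = d2 0 k * (W k j * (W k j)^*) * (g j * g j).
Proof.
rewrite !mxE !rmorphM /= sqrtC_conj ?h2.2 // (geC0_conj (g_ge0 j)).
rewrite -[in RHS](@sqrtC_mul _ (d2 0 k)); ring.
Qed.

Let j0 : 'I_s := Ordinal hs.
Let k0 : 'I_n := Ordinal (leq_trans hs hsn).
Let a (j : nat) : C := d1 0 (insubd j0 j).
Let w (k : nat) : C := if d2 0 (insubd k0 k) == 0 then 0 else (d2 0 (insubd k0 k))^-1.
Let c (j k : nat) : C := Uh (insubd k0 k) (insubd j0 j) * (Uh (insubd k0 k) (insubd j0 j))^*.

Lemma comb_inst : (forall j, (j < s)%N -> a j != 0 -> w j != 0) /\ \sum_(j < s) a j * w j <= \sum_(j < s) a j * \sum_(k < n) c j k * w k.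
Proof.
have vs : forall j, (j < s)%N -> val (insubd j0 j) = j by move=> j hj; rewrite val_insubd hj.
have vn : forall k, (k < n)%N -> val (insubd k0 k) = k by move=> k hk; rewrite val_insubd hk.
have Hha : forall i j, (i <= j)%N -> (j < s)%N -> a j <= a i.
  move=> i j ij js; rewrite /a; apply: h1.1; rewrite !vs //; exact: leq_ltn_trans js.
have Hha0 : forall j, 0 <= a j by move=> j; exact: h1.2.
have Hhw : forall i j, (i <= j)%N -> (j < n)%N -> w j != 0 -> w i != 0 /\ w i <= w j.
  move=> i j ij jn; rewrite /w.
  set I := insubd k0 i; set J := insubd k0 j.
  set x := d2 _ J; set y := d2 _ I.
  have IJ : x <= y by apply: h2.1; rewrite !vn //; exact: leq_ltn_trans jn.
  case: ifP => [_|dJ]; first by rewrite eqxx.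
  have dJp : 0 < x by rewrite lt0r dJ h2.2.
  have dIp : 0 < y by apply: lt_le_trans IJ.
  case: ifP => [/eqP dI0|_]; first by rewrite dI0 ltxx in dIp.
  move=> _; split; first by rewrite invr_eq0 (gt_eqF dIp).
  by rewrite lef_pV2 ?posrE.
have Hhw0 : forall k, 0 <= w k.
  by move=> k; rewrite /w; case: ifP => _ //; rewrite invr_ge0 h2.2.
have Hhc0 : forall j k, 0 <= c j k by move=> j k; exact: mul_conjC_ge0.
have UhE : forall k j, Uh k j = sqrtC (d2 0 k) * W k j * g j by move=> k j; rewrite mxE.
have Hhrow : forall j, (j < s)%N -> a j != 0 -> \sum_(k < n) c j k = 1.
  move=> j js aj; rewrite /c; under eq_bigr do rewrite valKd.
  have := congr1 (fun M : 'M[C]_s => M (insubd j0 j) (insubd j0 j)) hUU.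
  rewrite MtM !mxE eqxx mulr1n aj /= => H; rewrite -[RHS]H.
  by apply: eq_bigr => k _; rewrite mulrC.
have Hhcol : forall k, (k < n)%N -> \sum_(j < s) c j k <= 1.
  move=> k kn; rewrite /c; under eq_bigr do rewrite valKd.
  apply: (@bessel _ _ _ _ _ hUU) => j; rewrite mxE.
  case: (eqVneq (d1 0 j) 0) => [d0|dn]; last by left.
  right; split => // k'; by rewrite UhE /g d0 eqxx mulr0.
have Hhcw : forall j k, w k = 0 -> c j k = 0.
  move=> j k; rewrite /c /w; case: ifP => [/eqP d0 _|dn /eqP].
    by rewrite UhE d0 sqrtC0 !mul0r.
  by rewrite invr_eq0 dn.
split; [apply: (@jk _ _ _ hsn) | apply: (@comb_main _ _ _ hsn)]; by [].
Qed.

Lemma core_res : (forall j : 'I_s, d1 0 j != 0 -> d2 0 (widen_ord hsn j) != 0) /\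
  \sum_(j < s) (Pmat d1 d2) (widen_ord hsn j) j <= \sum_(j < s) \sum_(k < n) W k j * (W k j)^*.
Proof.
have [JK ineq] := comb_inst.
have wid : forall j : 'I_s, insubd k0 (val j) = widen_ord hsn j.
  move=> j; apply: val_inj; by rewrite val_insubd /= (leq_trans (ltn_ord j) hsn).
split.
  move=> j dj; have := JK j (ltn_ord j); rewrite /a /w valKd wid => /(_ dj).
  by case: ifP => [_|/negbT //]; rewrite eqxx.
apply: le_trans (le_trans _ ineq) _.
  apply: ler_sum => j _; rewrite /Pmat mxE /= eqxx /a /w valKd wid.
  by case: ifP => _; rewrite ?mulr0.
apply: ler_sum => j _; rewrite mulr_sumr; apply: ler_sum => k _.
rewrite /a /c /w !valKd Uh_sq.
case: ifP => [_|d2n]; first by rewrite !mulr0 mul_conjC_ge0.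
rewrite /g; case: ifP => [/eqP d10|d1n]; first by rewrite d10 mul0r mul_conjC_ge0.
suff -> : d1 0 j * (d2 0 k * (W k j * (W k j)^*) * ((sqrtC (d1 0 j))^-1 * (sqrtC (d1 0 j))^-1) * (d2 0 k)^-1)
   = W k j * (W k j)^* by [].
have y0 : sqrtC (d1 0 j) != 0 by rewrite sqrtC_eq0 d1n.
have z0 : d2 0 k != 0 by rewrite d2n.
rewrite -{1}[d1 0 j]sqrtC_mul; field.
by rewrite y0 z0.
Qed.

End Core.
Lemma trC_mul (C : numClosedFieldType) m n p (X : 'M[C]_(m,n)) (Y : 'M[C]_(n,p)) :
  (X *m Y) ^t* = Y ^t* *m X ^t*.
Proof. by rewrite trmx_mul map_mxM. Qed.

Lemma unitary_tl (C : numClosedFieldType) n (U : 'M[C]_n) : U \is unitarymx -> U ^t* *m U = 1%:M.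
Proof. by move=> hU; rewrite -[U ^t*]mul1mx mulmxKtV. Qed.
Arguments unitary_tl {C n U}.

Lemma unitary_tr (C : numClosedFieldType) n (U : 'M[C]_n) : U \is unitarymx -> U *m U ^t* = 1%:M.
Proof. by move/unitarymxP. Qed.
Arguments unitary_tr {C n U}.

Lemma PhE (C : numClosedFieldType) n s (hsn : (s <= n)%N) (d1 : 'rV[C]_s) (d2 : 'rV[C]_n)
  (g : 'rV[C]_n) i j :
  nonincr_nonneg d1 -> nonincr_nonneg d2 ->
  ((Phalf d1 d2) ^t* *m diag_mx g *m Phalf d1 d2) i j =
  (i == j)%:R * (g 0 (widen_ord hsn j) * Pmat d1 d2 (widen_ord hsn j) j).
Proof.
move=> h1 h2; rewrite WDW (bigD1 (widen_ord hsn j)) //= big1 ?addr0; last first.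
  move=> k kj; rewrite /Phalf /Pmat !mxE /=.
  have -> : (k == j :> nat) = false.
    by apply/negbTE; apply: contra kj => /eqP kj'; apply/eqP/val_inj.
  by rewrite sqrtC0 mulr0.
rewrite /Phalf !mxE /= eqxx.
have p0 : 0 <= (if d2 0 (widen_ord hsn j) == 0 then 0 else d1 0 j / d2 0 (widen_ord hsn j)).
  case: ifP => _ //; apply: divr_ge0; [exact: h1.2 | exact: h2.2].
case: (eqVneq i j) => [->|ne].
  rewrite eqxx mul1r sqrtC_conj; last exact: p0.
  set p := (if _ then _ else _); rewrite -[p in RHS]sqrtC_mul; ring.
have -> : (j == i :> nat) = false by apply/negbTE; apply: contra ne => /eqP e; apply/eqP/val_inj; rewrite /= e.
by rewrite sqrtC0 conjC0 !mul0r.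
Qed.

Theorem theorem1 (C : numClosedFieldType) (n s : nat) (P0 : C)
  (hs : (0 < s)%N) (hsn : (s <= n)%N) (hP0 : 0 < P0)
  (Psi : 'M[C]_n) (U2 : 'M[C]_n) (d2 : 'rV[C]_n)
  (A : 'M[C]_(n, s)) (U1 : 'M[C]_s) (d1 : 'rV[C]_s) :
  psdmx Psi ->
  U2 \is unitarymx -> nonincr_nonneg d2 ->
  Psi = U2 *m diag_mx d2 *m U2 ^t* ->
  \tr (A *m A ^t*) <= P0 ->
  U1 \is unitarymx -> nonincr_nonneg d1 ->
  A ^t* *m Psi *m A = U1 *m diag_mx d1 *m U1 ^t* ->
  (Atilde U2 d1 d2) ^t* *m Psi *m Atilde U2 d1 d2 = diag_mx d1 /\
  \tr (Atilde U2 d1 d2 *m (Atilde U2 d1 d2) ^t*) <= \tr (A *m A ^t*).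
Proof.
move=> _ hU2 hd2 hPsi _ hU1 hd1 hM.
set W := U2 ^t* *m A *m U1.
have hW : W ^t* *m diag_mx d2 *m W = diag_mx d1.
  rewrite /W !trC_mul trmxCK.
  have -> : U1 ^t* *m (A ^t* *m U2) *m diag_mx d2 *m (U2 ^t* *m A *m U1)
     = U1 ^t* *m (A ^t* *m Psi *m A) *m U1 by rewrite hPsi !mulmxA.
  rewrite hM !mulmxA (unitary_tl hU1) mul1mx -mulmxA (unitary_tl hU1) mulmx1 //.
have [JK ineq] := @core_res _ _ _ hs hsn _ _ _ hd2 hd1 hW.
have trA : \tr (A *m A ^t*) = \sum_(j < s) \sum_(k < n) W k j * (W k j)^*.
  have -> : \tr (A *m A ^t*) = \tr (W ^t* *m W).
    rewrite /W !trC_mul trmxCK.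
    have -> : U1 ^t* *m (A ^t* *m U2) *m (U2 ^t* *m A *m U1) = U1 ^t* *m (A ^t* *m A) *m U1.
      by rewrite !mulmxA -(mulmxA _ U2) (unitary_tr hU2) mulmx1.
    by rewrite [RHS]mxtrace_mulC !mulmxA (unitary_tr hU1) mul1mx mxtrace_mulC.
  rewrite /mxtrace; apply: eq_bigr => j _; rewrite MtM; apply: eq_bigr => k _.
  by rewrite mulrC.
have AtE : forall (G : 'M[C]_n), (Atilde U2 d1 d2) ^t* *m (U2 *m G *m U2 ^t*) *m Atilde U2 d1 d2
   = (Phalf d1 d2) ^t* *m G *m Phalf d1 d2.
  move=> G; rewrite /Atilde trC_mul !mulmxA -(mulmxA _ _ U2) (unitary_tl hU2) mulmx1.
  by rewrite -(mulmxA _ _ U2) (unitary_tl hU2) mulmx1.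
split.
  rewrite hPsi AtE; apply/matrixP => i j; rewrite PhE // [RHS]mxE.
  case: (eqVneq i j) => [<-|ne]; last by rewrite mul0r mulr0n.
  rewrite mul1r mulr1n /Pmat mxE /= eqxx.
  case: ifP => [/eqP d0|dn]; last by field; rewrite dn.
  rewrite mulr0; apply/esym/eqP; apply: contraT => /JK; by rewrite d0 eqxx.
rewrite trA mxtrace_mulC.
have -> : (Atilde U2 d1 d2) ^t* *m Atilde U2 d1 d2 = (Phalf d1 d2) ^t* *m diag_mx (const_mx 1) *m Phalf d1 d2.
  by rewrite diag_const_mx mulmx1 /Atilde trC_mul mulmxA -(mulmxA _ _ U2) (unitary_tl hU2) mulmx1.
apply: le_trans ineq; rewrite /mxtrace le_eqVlt; apply/orP; left; apply/eqP.
by apply: eq_bigr => j _; rewrite PhE // eqxx mxE !mul1r.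
Qed.
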